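(* Let $q$ be a system of Beurling primes with Beurling integers $\{\nu_n\}_{n\geq1}$ and $\sigma_c(\zeta_q)<\infty$, and let $\varepsilon>0$ and $C_0=\sigma_c(\zeta_q)+\varepsilon$. Then for almost every $q'>1$ there are only finitely many triples $(j,n,m)\in\mathbb{N}^3$ such that $$\Bigl|(q')^j-\frac{\nu_n}{\nu_m}\Bigr|\leq \nu_n^{-C_0}\nu_m^{-C_0}.$$
   Context: A system of Beurling primes is an increasing sequence (finite or infinite) $q=\{q_n\}$ of real numbers with $q_n>1$ (and $q_n\to\infty$ if infinite) such that $\{\log q_n\}$ is linearly independent over $\mathbb{Q}$. The Beurling integers $\{\nu_n\}_{n\geq1}$ are all finite products of elements of $q$ (including $\nu_1=1$), listed in increasing order. $\zeta_q(s)=\sum_{n\geq1}\nu_n^{-s}$ and $\sigma_c(\zeta_q)$ is its abscissa of convergence. *)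

(* Defs.v *)
From HB Require Import structures.
From mathcomp Require Import all_boot all_order all_algebra.
From mathcomp Require Import all_classical all_reals all_analysis.
Set Implicit Arguments. Unset Strict Implicit. Unset Printing Implicit Defensive.
Import Order.TTheory GRing.Theory Num.Theory numFieldNormedType.Exports.
Local Open Scope ring_scope.
Local Open Scope classical_set_scope.

Section Beurling.
Variable R : realType.

(* A prime system is given by q : nat -> R together with its length:
   N = Some k  : finite system q 0, ..., q (k-1);
   N = None    : infinite system q 0, q 1, ... *)
Definition bidx (N : option nat) (i : nat) : bool :=
  if N is Some k then (i < k)%N else true.

Definition beurling_primes (q : nat -> R) (N : option nat) : Prop :=
  [/\ (forall i j, bidx N i -> bidx N j -> (i < j)%N -> q i < q j),
      (forall i, bidx N i -> 1 < q i),
      (N = None -> q @ \oo --> +oo)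
    &
      forall (s : seq nat) (c : nat -> rat),
        uniq s -> all (bidx N) s ->
        \sum_(i <- s) ratr (c i) * ln (q i) = 0 ->
        forall i, i \in s -> c i = 0].

Definition beurling_integer (q : nat -> R) (N : option nat) (x : R) : Prop :=
  exists s : seq nat, all (bidx N) s /\ x = \prod_(i <- s) q i.

(* nu is the list of the Beurling integers in increasing order
   (nu 0 = nu_1 = 1, nu n = nu_{n+1}). *)
Definition beurling_listing (q : nat -> R) (N : option nat) (nu : nat -> R) : Prop :=
  (forall n m, (n < m)%N -> nu n < nu m) /\
  range nu = [set x | beurling_integer q N x].

Definition zeta_converges (nu : nat -> R) (s : R) : Prop :=
  cvgn (series (fun n => nu n `^ (- s))).

Definition abscissa_conv (nu : nat -> R) : \bar R :=
  ereal_inf [set (s%:E) | s in [set s | zeta_converges nu s]].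

End Beurling.

(* Main.v *)
Require Import Defs.
From HB Require Import structures.
From mathcomp Require Import all_boot all_order all_algebra.
From mathcomp Require Import all_classical all_reals all_analysis.
From mathcomp Require Import ring lra.
Import Order.TTheory GRing.Theory Num.Theory numFieldNormedType.Exports.
Local Open Scope ring_scope.
Local Open Scope classical_set_scope.

Section Aux.
Variable R : realType.

Lemma series_le_bound (f : nat -> \bar R) (M : \bar R) :
  (forall n, (0 <= f n)%E) -> (forall K, (\sum_(0 <= i < K) f i <= M)%E) ->
  (\sum_(0 <= i <oo) f i <= M)%E.
Proof.
move=> f0 fM; apply: lime_le; first exact: is_cvg_nneseries.
by apply: nearW => K; exact: fM.
Qed.

Lemma geom_bound (a : R) (J : nat) : 1 < a ->
  \sum_(0 <= j < J) (a ^+ j)^-1 <= a / (a - 1).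
Proof.
move=> a1.
have a0 : 0 < a by lra.
have ai0 : 0 < a^-1 by rewrite invr_gt0.
have := @geometric_le_lim R J 1 (a^-1) ler01 ai0.
rewrite gtr0_norm ?invr_gt0 // invf_lt1 // => /(_ a1).
have -> : series (geometric 1 a^-1) J = \sum_(0 <= j < J) (a ^+ j)^-1.
  by rewrite /series /=; apply: eq_bigr => j _; rewrite /geometric /= mul1r exprVn.
move=> /le_trans; apply; rewrite le_eqVlt; apply/orP; left; apply/eqP.
by field; lra.
Qed.

Lemma diam (a x y : R) (j : nat) : 0 <= a -> a <= x -> a <= y -> (0 < j)%N ->
  `|x - y| * a ^+ j.-1 <= `|x ^+ j - y ^+ j|.
Proof.
move=> a0 ax ay; case: j => // j _.
rewrite subrXX normrM; apply: ler_wpM2l => //=.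
have x0 : 0 <= x by lra. have y0 : 0 <= y by lra.
rewrite ger0_norm; last by apply: sumr_ge0 => i _; apply: mulr_ge0; apply: exprn_ge0.
rewrite big_ord_recl /= subn0 expr0 mulr1.
have h1 : a ^+ j <= x ^+ j by apply: lerXn2r.
have h2 : 0 <= \sum_(i < j) x ^+ (j - bump 0 i) * y ^+ bump 0 i.
  by apply: sumr_ge0 => i _; apply: mulr_ge0; apply: exprn_ge0.
lra.
Qed.

Lemma dbl (f : nat -> nat -> set R) (b : nat -> nat -> R) (B : R) :
  (forall n m, measurable (f n m)) ->
  (forall n m, (lebesgue_measure (f n m) <= (b n m)%:E)%E) ->
  (forall n m, 0 <= b n m) ->
  (forall N M, \sum_(0 <= n < N) \sum_(0 <= m < M) b n m <= B) ->
  (lebesgue_measure (\bigcup_n \bigcup_m f n m) <= B%:E)%E.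
Proof.
move=> mf fb b0 hB.
have mU : forall n, measurable (\bigcup_m f n m).
  by move=> n; apply: bigcup_measurable => m _.
have := @measure_sigma_subadditive _ _ _ lebesgue_measure (\bigcup_n \bigcup_m f n m) (fun n => \bigcup_m f n m) mU.
move=> /(_ (bigcup_measurable (fun n _ => mU n)) (fun x h => h)).
move=> /le_trans; apply.
apply: (@le_trans _ _ (\sum_(0 <= n <oo) \sum_(0 <= m <oo) (b n m)%:E)%E).
  apply: lee_nneseries => n _ //.
  have := @measure_sigma_subadditive _ _ _ lebesgue_measure (\bigcup_m f n m) (f n) (mf n) (mU n) (fun x h => h).
  move=> /le_trans; apply.
  by apply: lee_nneseries => // m _; exact: fb.
apply: series_le_bound => [n|K]; first by apply: nneseries_ge0 => m _ _; rewrite lee_fin.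
rewrite -nneseries_sum_nat; last by move=> i j; rewrite lee_fin.
apply: series_le_bound => [m|M]; first by apply: sume_ge0 => i _; rewrite lee_fin.
rewrite exchange_big /=.
under eq_bigr do rewrite sumEFin.
by rewrite sumEFin lee_fin; exact: hB.
Qed.


Lemma prodsum (p q : nat -> R) (k P Q : R) N M : 0 <= k ->
  (forall n, 0 <= p n) -> (forall n, 0 <= q n) ->
  (forall N, \sum_(0 <= n < N) p n <= P) -> (forall M, \sum_(0 <= m < M) q m <= Q) ->
  \sum_(0 <= n < N) \sum_(0 <= m < M) (k * p n * q m) <= k * P * Q.
Proof.
move=> k0 p0 q0 hP hQ.
have -> : \sum_(0 <= n < N) \sum_(0 <= m < M) (k * p n * q m) =
   k * (\sum_(0 <= n < N) p n) * (\sum_(0 <= m < M) q m).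
  transitivity (\sum_(0 <= n < N) (k * p n) * \sum_(0 <= m < M) q m).
    apply: eq_bigr => n _; rewrite big_distrr /=; apply: eq_bigr => m _.
    by [].
  by rewrite -big_distrl /= -big_distrr.
have sp : 0 <= \sum_(0 <= n < N) p n by apply: sumr_ge0.
have sq : 0 <= \sum_(0 <= m < M) q m by apply: sumr_ge0.
apply: ler_pM => //; first exact: mulr_ge0.
by apply: ler_pM.
Qed.

End Aux.

Section Main.
Variables (R : realType) (nu : nat -> R) (C Z : R).
Hypothesis hZ : forall K, \sum_(0 <= n < K) nu n `^ (- C) <= Z.

Definition u n := nu n `^ (- C).
Definition Sx (x : R) := [set t : nat * nat * nat | (0 < t.1.1)%N /\
  `|x ^+ t.1.1 - nu t.1.2 / nu t.2| <= u t.1.2 * u t.2].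
Definition Et a t := [set x | a < x /\ Sx x t].
Definition ct a t := xget 0 (Et a t).
Definition wt a t := 2 * (u t.1.2 * u t.2) * a * (a ^+ t.1.1)^-1.
Definition It a t := [set` `[ct a t - wt a t, ct a t + wt a t]%R].

Lemma u_ge0 n : 0 <= u n. Proof. exact: powR_ge0. Qed.

Lemma Z_ge0 : 0 <= Z.
Proof. by have := hZ 0; rewrite big_geq. Qed.

Lemma wt_ge0 a t : 0 < a -> 0 <= wt a t.
Proof.
move=> a0; rewrite /wt; apply: mulr_ge0; last by rewrite invr_ge0 exprn_ge0 // ltW.
apply: mulr_ge0; last exact: ltW.
by apply: mulr_ge0 => //; apply: mulr_ge0; exact: u_ge0.
Qed.

Lemma EI a t : 1 < a -> Et a t `<=` It a t.
Proof.
move=> a1 x Ex.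
rewrite /It /= in_itv /= -ler_distl.
have := xgetPex 0 (ex_intro _ x Ex); rewrite -/(ct a t).
move: (ct a t) => c [ac [_ hc]].
case: Ex => ax [j0 hx].
have hd := @diam R a x c t.1.1 (ltW (lt_trans ltr01 a1)) (ltW ax) (ltW ac) j0.
have h2 : `|x ^+ t.1.1 - c ^+ t.1.1| <= 2 * (u t.1.2 * u t.2).
  have -> : x ^+ t.1.1 - c ^+ t.1.1 = (x ^+ t.1.1 - nu t.1.2 / nu t.2) - (c ^+ t.1.1 - nu t.1.2 / nu t.2) by ring.
  apply: le_trans; first exact: ler_normB.
  by rewrite mulr2n mulrDl mul1r; apply: lerD.
rewrite /wt; move: j0 hd h2; case: t.1.1 => // j _ /= hd h2.
have a0 : 0 < a by lra.
have aj : 0 < a ^+ j by apply: exprn_gt0.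
have -> : 2 * (u t.1.2 * u t.2) * a * (a ^+ j.+1)^-1 = 2 * (u t.1.2 * u t.2) / a ^+ j.
  by rewrite exprS; field; rewrite ?gt_eqF.
by rewrite ler_pdivlMr //; apply: le_trans h2.
Qed.

Lemma mI a t : 1 < a -> (lebesgue_measure (It a t) <= (2 * wt a t)%:E)%E.
Proof.
move=> a1; have w0 := @wt_ge0 a t (lt_trans ltr01 a1).
have := lebesgue_measure_itv `[ct a t - wt a t, ct a t + wt a t]%R.
rewrite /It => ->; rewrite /=; case: ifP => _.
  by rewrite -EFinB lee_fin; lra.
by rewrite lee_fin; lra.
Qed.

Definition U1 a K := \bigcup_n \bigcup_m It a (K, n, m).
Definition U2 a K := \bigcup_j \bigcup_m It a (j, K, m).
Definition U3 a K := \bigcup_j \bigcup_n It a (j, n, K).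
Definition Gs a K := U1 a K `|` U2 a K `|` U3 a K.

Lemma mIt (a : R) t : measurable (It a t). Proof. exact: measurable_itv. Qed.

Lemma ka_ge0 (a : R) K : 1 < a -> 0 <= 4 * a * (a ^+ K)^-1.
Proof.
move=> a1; have a0 : 0 <= a by lra.
by apply: mulr_ge0; [apply: mulr_ge0 | rewrite invr_ge0 exprn_ge0].
Qed.

Lemma G_ge0 (a : R) : 1 < a -> 0 <= a / (a - 1).
Proof. by move=> a1; apply: divr_ge0; lra. Qed.

Lemma U1b (a : R) K : 1 < a ->
  (lebesgue_measure (U1 a K) <= (4 * a * (a ^+ K)^-1 * Z * Z)%:E)%E.
Proof.
move=> a1; apply: (@dbl R _ (fun n m => 4 * a * (a ^+ K)^-1 * u n * u m)).
- by move=> n m; exact: mIt.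
- move=> n m; apply: le_trans (@mI a _ a1) _; rewrite lee_fin /wt /=.
  by rewrite le_eqVlt; apply/orP; left; apply/eqP; ring.
- move=> n m; apply: mulr_ge0; last exact: u_ge0.
  by apply: mulr_ge0; [exact: ka_ge0 | exact: u_ge0].
- move=> N M; apply: prodsum => //; [exact: ka_ge0 | exact: u_ge0 | exact: u_ge0].
Qed.

Lemma U2b (a : R) K : 1 < a ->
  (lebesgue_measure (U2 a K) <= (4 * a * u K * (a / (a - 1)) * Z)%:E)%E.
Proof.
move=> a1; have a0 : 0 < a by lra.
have k0 : 0 <= 4 * a * u K by apply: mulr_ge0; [lra | exact: u_ge0].
apply: (@dbl R _ (fun j m => 4 * a * u K * (a ^+ j)^-1 * u m)).
- by move=> n m; exact: mIt.
- move=> n m; apply: le_trans (@mI a _ a1) _; rewrite lee_fin /wt /=.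
  by rewrite le_eqVlt; apply/orP; left; apply/eqP; ring.
- move=> n m; apply: mulr_ge0; last exact: u_ge0.
  by apply: mulr_ge0 => //; rewrite invr_ge0 exprn_ge0 // ltW.
- move=> N M; apply: prodsum => //.
  + by move=> j; rewrite invr_ge0 exprn_ge0 // ltW.
  + exact: u_ge0.
  + by move=> J; apply: geom_bound.
Qed.

Lemma U3b (a : R) K : 1 < a ->
  (lebesgue_measure (U3 a K) <= (4 * a * u K * (a / (a - 1)) * Z)%:E)%E.
Proof.
move=> a1; have a0 : 0 < a by lra.
have k0 : 0 <= 4 * a * u K by apply: mulr_ge0; [lra | exact: u_ge0].
apply: (@dbl R _ (fun j m => 4 * a * u K * (a ^+ j)^-1 * u m)).
- by move=> n m; exact: mIt.
- move=> n m; apply: le_trans (@mI a _ a1) _; rewrite lee_fin /wt /=.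
  by rewrite le_eqVlt; apply/orP; left; apply/eqP; ring.
- move=> n m; apply: mulr_ge0; last exact: u_ge0.
  by apply: mulr_ge0 => //; rewrite invr_ge0 exprn_ge0 // ltW.
- move=> N M; apply: prodsum => //.
  + by move=> j; rewrite invr_ge0 exprn_ge0 // ltW.
  + exact: u_ge0.
  + by move=> J; apply: geom_bound.
Qed.

Lemma mU (a : R) (f : nat -> nat -> nat * nat * nat) :
  measurable (\bigcup_n \bigcup_m It a (f n m)).
Proof. by apply: bigcup_measurable => n _; apply: bigcup_measurable => m _; exact: mIt. Qed.

Lemma mU1 (a : R) K : measurable (U1 a K). Proof. exact: (mU a (fun n m => (K, n, m))). Qed.
Lemma mU2 (a : R) K : measurable (U2 a K). Proof. exact: (mU a (fun n m => (n, K, m))). Qed.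
Lemma mU3 (a : R) K : measurable (U3 a K). Proof. exact: (mU a (fun n m => (n, m, K))). Qed.

Lemma mGs (a : R) K : measurable (Gs a K).
Proof. by apply: measurableU; [apply: measurableU|]; [exact: mU1|exact: mU2|exact: mU3]. Qed.

Lemma Gsb (a : R) K : 1 < a ->
  (lebesgue_measure (Gs a K) <=
   ((4 * a * Z * Z) * (a ^+ K)^-1 + (8 * a * (a / (a - 1)) * Z) * u K)%:E)%E.
Proof.
move=> a1.
apply: le_trans; first apply: measureU2.
- by apply: measurableU; [exact: mU1|exact: mU2].
- exact: mU3.
apply: le_trans; first apply: leeD; first apply: measureU2.
- exact: mU1.
- exact: mU2.
- exact: lexx.
apply: le_trans; first (apply: leeD; first apply: leeD).
- exact: U1b.
- exact: U2b.
- exact: U3b.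
rewrite -!EFinD lee_fin le_eqVlt; apply/orP; left; apply/eqP; ring.
Qed.

Lemma Gs_sum (a : R) : 1 < a -> (\sum_(0 <= K <oo) lebesgue_measure (Gs a K) < +oo)%E.
Proof.
move=> a1; have a0 : 0 < a by lra.
apply: (@le_lt_trans _ _ ((4 * a * Z * Z) * (a / (a - 1)) + (8 * a * (a / (a - 1)) * Z) * Z)%:E); last exact: ltry.
apply: series_le_bound => [K|L]; first exact: measure_ge0.
apply: le_trans; first by apply: lee_sum => K _; exact: Gsb.
rewrite sumEFin lee_fin big_split /= -!big_distrr /=.
have z0 := Z_ge0.
apply: lerD; apply: ler_wpM2l.
- by apply: mulr_ge0 => //; apply: mulr_ge0 => //; apply: mulr_ge0; lra.
- exact: geom_bound.
- apply: mulr_ge0 => //; apply: mulr_ge0; [apply: mulr_ge0; lra | exact: G_ge0].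
- exact: hZ.
Qed.

Lemma bad_neg (a : R) : 1 < a ->
  lebesgue_measure.-negligible [set x | a < x /\ ~ finite_set (Sx x)].
Proof.
move=> a1; exists (lim_sup_set (Gs a)); split.
- apply: bigcap_measurable => [|k _]; first by exists 0.
  by apply: bigcup_measurable => j _; exact: mGs.
- by apply: lim_sup_set_cvg0 => //; [exact: mGs | exact: Gs_sum].
- move=> x [ax hnf] n0 _; apply: contrapT => hno; apply: hnf.
  apply: (@sub_finite_set _ _ ((`I_n0 `*` `I_n0) `*` `I_n0)); last first.
    by apply: finite_setX; [apply: finite_setX|]; exact: finite_II.
  move=> [[j n] m] hS.
  have hI : It a (j, n, m) x by apply: EI => //; split.
  have nG : forall K, (n0 <= K)%N -> ~ Gs a K x by move=> K hK hG; apply: hno; exists K.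
  split; [split|]; rewrite /= ltnNge; apply/negP => h.
  + by apply: (nG j h); left; left; exists n => //; exists m.
  + by apply: (nG n h); left; right; exists j => //; exists m.
  + by apply: (nG m h); right; exists j => //; exists n.
Qed.

End Main.

Theorem mainTheorem3 (R : realType) (q : nat -> R) (N : option nat)
  (hq : beurling_primes q N) (nu : nat -> R) (hnu : beurling_listing q N nu)
  (hfin : (abscissa_conv nu < +oo)%E) (eps : R) (heps : 0 < eps) :
  {ae (@lebesgue_measure R), forall x : R, 1 < x ->
     finite_set [set t : nat * nat * nat |
        (0 < t.1.1)%N /\
        `| x ^+ t.1.1 - nu t.1.2 / nu t.2 | <=
          nu t.1.2 `^ (- (fine (abscissa_conv nu) + eps)) *
          nu t.2 `^ (- (fine (abscissa_conv nu) + eps))]}.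
Proof.
set C := fine (abscissa_conv nu) + eps.
have nu1 : forall n, 1 <= nu n.
  move=> n; case: hnu => _ hr; case: hq => _ hq1 _ _.
  have : [set x | beurling_integer q N x] (nu n) by rewrite -hr; exists n.
  case=> s [hs ->]; elim: s hs => [|i s IH]; first by rewrite big_nil.
  rewrite /= big_cons => /andP [hi hs]; apply: mulr_ege1; first exact: ltW (hq1 i hi).
  exact: IH.
have [s hs sC] : exists2 s, zeta_converges nu s & s <= C.
  move: hfin; rewrite /C /abscissa_conv.
  case E: (ereal_inf _) => [r| |] // _.
  - have : (ereal_inf [set s%:E | s in [set s | zeta_converges nu s]] < (r + eps)%:E)%E.
      by rewrite E lte_fin ltrDl.
    move=> /ereal_inf_lt [_ [s hs <-]]; rewrite lte_fin => h.
    by exists s => //=; rewrite ltW.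
  - have : (ereal_inf [set s%:E | s in [set s | zeta_converges nu s]] < eps%:E)%E.
      by rewrite E ltNyr.
    move=> /ereal_inf_lt [_ [s hs <-]]; rewrite lte_fin => h.
    by exists s => //=; rewrite add0r ltW.
have hZ : forall K, \sum_(0 <= n < K) nu n `^ (- C) <= limn (series (fun n => nu n `^ (- s))).
  move=> K; apply: le_trans (nondecreasing_cvgn_le _ hs K).
  - rewrite /series /=; apply: ler_sum => n _; apply: ler_powR => //.
    by rewrite lerN2.
  - by apply: nondecreasing_series => n _ _; exact: powR_ge0.
have key : lebesgue_measure.-negligible (\bigcup_k
    [set x | 1 + k.+1%:R^-1 < x /\ ~ finite_set (@Sx R nu C x)]).
  apply: negligible_bigcup => k; apply: (@bad_neg R nu C _ hZ).
  by rewrite ltrDl invr_gt0.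
apply: negligibleS key => x /= /not_implyP [x1 hx].
have [k hk] := ltr_add_invr x1.
by exists k => //; split.
Qed.
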